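(* Let $f(X)=N(N-1)\sum_{i=1}^{\ell}\beta_i\,t(H_i,X)$ be a subgraph-counting function. Then for every $X\in\{0,1\}^n$ and every index $j\in[n]$, $$|\partial_jf(X)|\le\sum_{i=1}^{\ell}|\beta_i|\,|E(H_i)|.$$
   Context: $n=\binom N2$; $X\in\{0,1\}^n$ is identified with a simple graph on $[N]$ (coordinates indexed by unordered pairs). For a finite simple graph $H$ on $[m]$, $t(H,X)$ is the number of injective homomorphisms $H\to X$ divided by $N(N-1)\cdots(N-m+1)$. $\partial_jf(X)=\frac12\big(f(X_1,\dots,X_{j-1},1,X_{j+1},\dots,X_n)-f(X_1,\dots,X_{j-1},0,X_{j+1},\dots,X_n)\big)$. *)

(* Defs.v *)
From mathcomp Require Import all_boot all_order all_algebra.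
From mathcomp Require Import reals.
Set Implicit Arguments. Unset Strict Implicit. Unset Printing Implicit Defensive.
Import Order.TTheory GRing.Theory Num.Theory.
Local Open Scope ring_scope.

(* Unordered pairs {u,v} (u <> v) of vertices of [N]; #|upair N| = 'C(N,2) = n.
   These index the coordinates of {0,1}^n. *)
Definition upair (N : nat) := {e : {set 'I_N} | #|e| == 2%N}.

(* X in {0,1}^n, identified with a simple graph on [N]. *)
Definition graph01 (N : nat) := {ffun upair N -> bool}.

Definition adj (N : nat) (X : graph01 N) (u v : 'I_N) : bool :=
  [exists e : upair N, (val e == [set u; v]) && X e].

(* A finite simple graph H on [m] is given by its edge set, a set of
   unordered pairs of [m]; |E(H)| = #|H|. *)
Definition inj_hom_count (N m : nat) (H : {set upair m}) (X : graph01 N) : nat :=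
  #|[set phi : {ffun 'I_m -> 'I_N} | injectiveb phi &&
     [forall e in H, forall u, forall v,
        (val e == [set u; v]) ==> adj X (phi u) (phi v)]]|.

Definition tdens (R : realType) (N m : nat) (H : {set upair m}) (X : graph01 N) : R :=
  (inj_hom_count H X)%:R / (N ^_ m)%:R.

Definition subgraph_f (R : realType) (N l : nat) (m : 'I_l -> nat)
  (H : forall i : 'I_l, {set upair (m i)}) (beta : 'I_l -> R) (X : graph01 N) : R :=
  (N%:R * (N%:R - 1)) * \sum_(i < l) beta i * tdens R (H i) X.

Definition setc (N : nat) (X : graph01 N) (j : upair N) (b : bool) : graph01 N :=
  [ffun k => if k == j then b else X k].

Definition dpart (R : realType) (N : nat) (f : graph01 N -> R) (j : upair N)
  (X : graph01 N) : R :=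
  (f (setc X j true) - f (setc X j false)) / 2.

(* Main.v *)
Require Import Defs.
From mathcomp Require Import all_boot all_order all_algebra all_fingroup.
From mathcomp Require Import reals ring.
Import Order.TTheory GRing.Theory Num.Theory.
Set Implicit Arguments. Unset Strict Implicit.

Definition Tset (m N : nat) (a b : 'I_m) (x y : 'I_N) :=
  [set phi : {ffun 'I_m -> 'I_N} | injectiveb phi && (phi a == x) && (phi b == y)].

Lemma Tset_le m N (a b : 'I_m) (x y x' y' : 'I_N) :
  x != y -> x' != y' -> (#|Tset a b x y| <= #|Tset a b x' y'|)%N.
Proof.
move=> nxy nxy'.
pose g := fun z => tperm y' (tperm x x' y) (tperm x x' z).
have ginj : injective g by move=> z1 z2 /perm_inj/perm_inj.
pose F := fun phi : {ffun 'I_m -> 'I_N} => ([ffun i => g (phi i)] : {ffun 'I_m -> 'I_N}).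
have Finj : injective F.
  move=> p1 p2 HH; apply/ffunP=> i; have := congr1 (fun f : {ffun _ -> _} => f i) HH; rewrite /F /= !ffunE; exact: ginj.
rewrite -(card_imset _ Finj); apply: subset_leq_card; apply/subsetP => z /imsetP[phi + ->].
rewrite inE => /andP[/andP[inj /eqP ha] /eqP hb].
rewrite inE !ffunE ha hb; apply/andP; split; first (apply/andP; split).
- apply/injectiveP => i1 i2; rewrite !ffunE => /ginj; exact: (injectiveP _ inj).
- rewrite /g tpermL tpermD //; first by rewrite eq_sym.
  apply/negP => /eqP HH. have : tperm x x' y = tperm x x' x by rewrite tpermL.
  by move/perm_inj => /eqP; rewrite eq_sym (negbTE nxy).
- by rewrite /g tpermR.
Qed.

Lemma Tset_eq m N (a b : 'I_m) (x y x' y' : 'I_N) :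
  x != y -> x' != y' -> #|Tset a b x y| = #|Tset a b x' y'|.
Proof. by move=> h1 h2; apply/anti_leq; rewrite !Tset_le. Qed.

Lemma sum_eq1 N (z : 'I_N) : (\sum_(y < N) ((z == y) : nat) = 1)%N.
Proof.
rewrite (bigD1 z) //= eqxx big1 ?addn0 // => y; rewrite eq_sym => /negbTE -> //.
Qed.

Lemma Tset_card m N (a b : 'I_m) (x y : 'I_N) : a != b -> x != y ->
  (#|Tset a b x y| * (N * (N - 1)) = N ^_ m)%N.
Proof.
move=> nab nxy.
have -> : (N ^_ m = \sum_(x' < N) \sum_(y' < N) #|Tset a b x' y'|)%N.
  have := card_inj_ffuns 'I_m 'I_N; rewrite !card_ord => <-.
  rewrite -sum1_card.
  transitivity (\sum_(f in [set f : {ffun 'I_m -> 'I_N} | injectiveb f])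
      \sum_(x' < N) \sum_(y' < N) (((f a == x') : nat) * ((f b == y') : nat)))%N.
    apply: eq_bigr => f _.
    rewrite (eq_bigr (fun x' => ((f a == x') : nat))%N); first by rewrite sum_eq1.
    by move=> x' _; rewrite -big_distrr /= sum_eq1 muln1.
  rewrite exchange_big; apply: eq_bigr => x' _.
  rewrite exchange_big; apply: eq_bigr => y' _.
  rewrite -sum1_card big_mkcond [RHS]big_mkcond; apply: eq_bigr => f _.
  rewrite !inE; case: (injectiveb f) => //=.
  by case: (f a == x'); case: (f b == y').
rewrite (eq_bigr (fun _ => #|Tset a b x y| * (N - 1))%N).
  by rewrite sum_nat_const card_ord mulnCA.
move=> x' _.
rewrite (bigD1 x') //=.
have -> : #|Tset a b x' x'| = 0%N.
  apply/eqP; rewrite cards_eq0; apply/eqP/setP => f; rewrite !inE.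
  apply/negP => /andP[/andP[/injectiveP finj /eqP h1] /eqP h2].
  by move: nab; rewrite -h2 in h1; rewrite (finj _ _ h1) eqxx.
rewrite add0n (eq_bigr (fun _ => #|Tset a b x y|)).
  rewrite sum_nat_const mulnC; congr (_ * _)%N.
  by rewrite subn1 -[in RHS](card_ord N) -(cardC1 x'); apply: eq_card.
by move=> y' hy; apply: Tset_eq; rewrite // eq_sym.
Qed.

Definition Aset N m (H : {set upair m}) (X : graph01 N) :=
  [set phi : {ffun 'I_m -> 'I_N} | injectiveb phi &&
     [forall e in H, forall u, forall v,
        (val e == [set u; v]) ==> adj X (phi u) (phi v)]].

Definition Sset N m (e : upair m) (j : upair N) :=
  [set phi : {ffun 'I_m -> 'I_N} | injectiveb phi &&
     [exists u, exists v, (val e == [set u; v]) && ([set phi u; phi v] == val j)]].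

Lemma set2_eq (T : finType) (u v a b : T) : a != b -> [set u; v] = [set a; b] ->
  (u == a) && (v == b) || (u == b) && (v == a).
Proof.
move=> nab he.
have ha : a \in [set u; v] by rewrite he !inE eqxx.
have hb : b \in [set u; v] by rewrite he !inE eqxx orbT.
move: ha hb; rewrite !inE.
case/orP => /eqP ea; case/orP => /eqP eb; subst; rewrite ?eqxx ?orbT //=.
all: by rewrite eqxx in nab.
Qed.

Lemma Sset_bound N m (e : upair m) (j : upair N) :
  (N * (N - 1) * #|Sset e j| <= 2 * N ^_ m)%N.
Proof.
case/cards2P: (valP e) => a [b [nab he]].
case/cards2P: (valP j) => x [y [nxy hj]].
have sub : Sset e j \subset Tset a b x y :|: Tset a b y x.
  apply/subsetP => phi; rewrite !inE => /andP[inj /existsP[u /existsP[v /andP[/eqP heu /eqP hj']]]].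
  rewrite inj /=.
  rewrite he in heu; rewrite hj in hj'.
  have h1 := set2_eq nab (esym heu); have h2 := set2_eq nxy hj'.
  move: h2; case/orP: h1 => /andP[/eqP -> /eqP ->] /orP[]/andP[/eqP -> /eqP ->];
    by rewrite !eqxx ?orbT.
have hle : (#|Sset e j| <= #|Tset a b x y| + #|Tset a b y x|)%N.
  apply: leq_trans (subset_leq_card sub) _; exact: leq_card_setU.
have e1 := Tset_card nab nxy.
have nyx : y != x by rewrite eq_sym.
have e2 := Tset_card nab nyx.
apply: leq_trans (leq_mul (leqnn _) hle) _.
by rewrite mulnDr ![(N * (N - 1) * _)%N]mulnC e1 e2 mul2n addnn.
Qed.

Lemma key N m (H : {set upair m}) (X : graph01 N) (j : upair N) :
  Aset H (setc X j false) \subset Aset H (setc X j true) /\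
  (N * (N - 1) * #|Aset H (setc X j true) :\: Aset H (setc X j false)|
     <= 2 * #|H| * N ^_ m)%N.
Proof.
split.
  apply/subsetP => phi; rewrite !inE => /andP[-> /forallP hf] /=.
  apply/forallP => e; apply/implyP => eH.
  apply/forallP => u; apply/forallP => v; apply/implyP => heu.
  have := hf e; rewrite eH /= => /forallP/(_ u)/forallP/(_ v); rewrite heu /=.
  case/existsP => e' /andP[he' Xe']; apply/existsP; exists e'; rewrite he' /=.
  by move: Xe'; rewrite !ffunE; case: (e' == j).
set D := _ :\: _.
have hD : (#|D| <= \sum_(e in H) #|Sset e j|)%N.
  rewrite -sum1_card.
  apply: (@leq_trans (\sum_(phi in D) \sum_(e in H) ((phi \in Sset e j) : nat))).
    apply: leq_sum => phi; rewrite !inE => /andP[h0 h1].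
    move: h1 => /andP[inj h1]; move: h0; rewrite inj /=.
    case/forallPn => e; rewrite negb_imply => /andP[eH].
    case/forallPn => u; case/forallPn => v; rewrite negb_imply => /andP[heu nadj].
    move/forallP: h1 => /(_ e); rewrite eH /= => /forallP/(_ u)/forallP/(_ v).
    rewrite heu /= => /existsP[e' /andP[he' Xe']].
    have ej : e' = j.
      apply/eqP; apply/negPn/negP => ne; move: nadj; apply/negP; rewrite negbK.
      apply/existsP; exists e'; rewrite he' /=.
      by move: Xe'; rewrite !ffunE (negbTE ne).
    rewrite (bigD1 e) //= inE inj /=.
    suff -> : [exists u0, exists v0, (val e == [set u0; v0]) &&
        ([set phi u0; phi v0] == val j)] by [].
    apply/existsP; exists u; apply/existsP; exists v; rewrite heu /=.
    by rewrite -ej eq_sym.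
  rewrite exchange_big /=; apply: leq_sum => e _.
  rewrite -sum1_card big_mkcond /= [X in (_ <= X)%N]big_mkcond /=.
  apply: leq_sum => phi _; case: (phi \in D) => //=; case: (phi \in Sset e j).
apply: leq_trans (leq_mul (leqnn (N * (N - 1))) hD) _.
rewrite big_distrr /=.
apply: (@leq_trans (\sum_(e in H) (2 * N ^_ m))); first by apply: leq_sum => e _; exact: Sset_bound.
by rewrite sum_nat_const mulnCA mulnA.
Qed.

Local Open Scope ring_scope.

Lemma tdiff (R : realType) N m (H : {set upair m}) (X : graph01 N) (j : upair N) :
  0 <= tdens R H (setc X j true) - tdens R H (setc X j false) /\
  (N%:R * (N%:R - 1)) * (tdens R H (setc X j true) - tdens R H (setc X j false))
     <= 2 * (#|H|)%:R.
Proof.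
have [sub hk] := key H X j.
have N2 : (2 <= N)%N.
  by have := max_card (mem (val j)); rewrite card_ord (eqP (valP j)).
have c1 : inj_hom_count H (setc X j true) = #|Aset H (setc X j true)| by [].
have c0 : inj_hom_count H (setc X j false) = #|Aset H (setc X j false)| by [].
have hD : #|Aset H (setc X j true) :\: Aset H (setc X j false)| =
   (#|Aset H (setc X j true)| - #|Aset H (setc X j false)|)%N.
  by rewrite cardsD (setIidPr sub).
have hle : (#|Aset H (setc X j false)| <= #|Aset H (setc X j true)|)%N
  by apply: subset_leq_card.
rewrite /tdens c1 c0 -mulrBl -natrB // -hD.
have KE : (N%:R * (N%:R - 1) : R) = (N * (N - 1))%N%:R by rewrite natrM natrB ?(leq_trans _ N2).
rewrite KE.
have [F0|Fpos] := eqVneq (N ^_ m)%N 0%N.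
  by rewrite F0 invr0 !mulr0; split => //; rewrite mulr_ge0 ?ler0n.
have Fp : (0 : R) < (N ^_ m)%N%:R by rewrite ltr0n lt0n.
split; first by rewrite divr_ge0 ?ler0n ?ltW.
rewrite mulrA ler_pdivrMr // -!natrM ler_nat.
by [].
Qed.

Theorem lemma26 (R : realType) (N l : nat) (m : 'I_l -> nat)
  (H : forall i : 'I_l, {set upair (m i)}) (beta : 'I_l -> R)
  (X : graph01 N) (j : upair N) :
  `|dpart (subgraph_f H beta) j X| <= \sum_(i < l) `|beta i| * (#|H i|)%:R.
Proof.
set K : R := N%:R * (N%:R - 1).
pose d i := tdens R (H i) (setc X j true) - tdens R (H i) (setc X j false).
have -> : dpart (subgraph_f H beta) j X = \sum_(i < l) beta i * (K * d i / 2).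
  rewrite /dpart /subgraph_f -/K -mulrBr -sumrB big_distrr /= mulr_suml.
  by apply: eq_bigr => i _; rewrite /d; ring.
apply: le_trans (ler_norm_sum _ _ _) _.
apply: ler_sum => i _.
have [d0 dK] := tdiff R (H i) X j.
have N2 : (2 <= N)%N.
  by have := max_card (mem (val j)); rewrite card_ord (eqP (valP j)).
have K0 : 0 <= K.
  by rewrite /K mulr_ge0 ?ler0n // subr_ge0 ler1n (leq_trans _ N2).
rewrite normrM [X in _ * X]ger0_norm; last by apply: divr_ge0; [apply: mulr_ge0 | apply: ler0n].
apply: ler_wpM2l; first exact: normr_ge0.
rewrite ler_pdivrMr // [X in _ <= X]mulrC; exact: dK.
Qed.
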